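(* For a $d$-dimensional state ensemble $\Omega=\{(p_j,\rho_j)\}_{j=0}^{k-1}$, the optimal discrimination probability via DIO, $\widetilde{P}_{\mathrm{suc,DIO}}(\Omega)$, cannot be improved with the assistance of any coherent state, i.e. discriminating $\{(p_j,\rho_j\otimes\tau)\}_j$ via DIO for any ancillary state $\tau$ gives no higher success probability.
   Context: Let $\Delta(\rho)=\sum_i |i\rangle\langle i|\rho|i\rangle\langle i|$ be the completely dephasing channel in the computational basis. DIO (dephasing-covariant incoherent operations) are channels $\mathcal{E}$ with $\Delta\circ\mathcal{E}=\mathcal{E}\circ\Delta$. Quantum state discrimination via free operations $\mathcal{O}$: $\widetilde{P}_{\mathrm{suc},\mathcal{O}}(\Omega)=\sup\sum_j p_j\mathrm{tr}[\mathcal{N}_{A\to BA'}(\rho_j)(|j\rangle\langle j|_B\otimes I_{A'})]$ over $\mathcal{N}_{A\to BA'}\in\mathcal{O}$, $\dim B=k$, $A'\cong A$. *)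

(* Defs.v *)
From mathcomp Require Import all_boot all_algebra.
From mathcomp Require Import complex.
From mathcomp Require Import all_classical all_reals ereal.
Set Implicit Arguments. Unset Strict Implicit. Unset Printing Implicit Defensive.
Import GRing.Theory Num.Theory.
Local Open Scope ring_scope.

Section QInfo.
Variable R : realType.
Local Notation C := R[i].

(* Bipartite index k : 'I_(m*n) <-> pair (i,j) : 'I_m * 'I_n, lexicographic
   order (i major), the same identification as mathcomp's mxvec_index. *)
Definition pidx (m n : nat) (k : 'I_(m * n)) : 'I_m * 'I_n :=
  enum_val (cast_ord (esym (mxvec_cast m n)) k).

Definition kron (m1 n1 m2 n2 : nat) (A : 'M[C]_(m1, n1)) (B : 'M[C]_(m2, n2))
  : 'M[C]_(m1 * m2, n1 * n2) :=
  \matrix_(p, q) (A (pidx p).1 (pidx q).1 * B (pidx p).2 (pidx q).2).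

Definition adj_mx (m n : nat) (A : 'M[C]_(m, n)) : 'M[C]_(n, m) :=
  map_mx Num.conj A^T.

(* positive semidefinite (over C, 0 <= z means z is real and nonnegative) *)
Definition psd (n : nat) (A : 'M[C]_n) : Prop :=
  forall v : 'cV[C]_n, 0 <= (adj_mx v *m A *m v) 0 0.

Definition density (n : nat) (rho : 'M[C]_n) : Prop :=
  psd rho /\ \tr rho = 1.

(* id_r (x) E  acting on 'M_(r*n) blockwise *)
Definition ampl (r n m : nat) (E : 'M[C]_n -> 'M[C]_m) (X : 'M[C]_(r * n))
  : 'M[C]_(r * m) :=
  \matrix_(p, q)
    (E (\matrix_(a, b) X (mxvec_index (pidx p).1 a) (mxvec_index (pidx q).1 b)))
      (pidx p).2 (pidx q).2.

Definition is_channel (n m : nat) (E : 'M[C]_n -> 'M[C]_m) : Prop :=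
  [/\ forall (a : C) (X Y : 'M[C]_n), E (a *: X + Y) = a *: E X + E Y,
      forall (r : nat) (X : 'M[C]_(r * n)), psd X -> psd (ampl E X)
    & forall X : 'M[C]_n, \tr (E X) = \tr X].

Definition dephase (n : nat) (X : 'M[C]_n) : 'M[C]_n :=
  \matrix_(i, j) (if i == j then X i i else 0).

Definition DIO (n m : nat) (E : 'M[C]_n -> 'M[C]_m) : Prop :=
  is_channel E /\ forall X : 'M[C]_n, dephase (E X) = E (dephase X).

Definition ensemble (k d : nat) (p : 'I_k -> R) (rho : 'I_k -> 'M[C]_d) : Prop :=
  [/\ forall j, 0 <= p j, \sum_(j < k) p j = 1 & forall j, density (rho j)].

(* success probability of discrimination with N : A -> B A', dim B = k, A' ~ A *)
Definition succ (k d : nat) (p : 'I_k -> R) (rho : 'I_k -> 'M[C]_d)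
  (N : 'M[C]_d -> 'M[C]_(k * d)) : R :=
  complex.Re (\sum_(j < k) ((p j)%:C)%C *
     \tr (N (rho j) *m kron (delta_mx j j : 'M[C]_k) (1%:M : 'M[C]_d))).

Definition Psuc_DIO (k d : nat) (p : 'I_k -> R) (rho : 'I_k -> 'M[C]_d) : \bar R :=
  ereal_sup [set ((succ p rho N)%:E) | N in [set N | DIO N]]%classic.

End QInfo.

(* Main.v *)
Require Import Defs.
From mathcomp Require Import all_boot all_algebra.
From mathcomp Require Import complex.
From mathcomp Require Import all_classical all_reals ereal.
From mathcomp Require Import ring.
Import GRing.Theory Num.Theory.
Local Open Scope ring_scope.
Set Implicit Arguments. Unset Strict Implicit. Unset Printing Implicit Defensive.

Section Aux.
Variable R : realType.
Local Notation C := R[i].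

Lemma pidx_mxvec m n (i : 'I_m) (j : 'I_n) : pidx (mxvec_index i j) = (i, j).
Proof. by rewrite /pidx /mxvec_index cast_ordK enum_rankK. Qed.

Lemma mxvec_pidx m n (p : 'I_(m * n)) : mxvec_index (pidx p).1 (pidx p).2 = p.
Proof. by rewrite /mxvec_index -surjective_pairing /pidx enum_valK cast_ordKV. Qed.

Lemma pidx_inj m n : injective (@pidx m n).
Proof. by move=> p q e; rewrite -(mxvec_pidx p) -(mxvec_pidx q) e. Qed.

Lemma big_pidx m n (F : 'I_(m * n) -> C) :
  \sum_p F p = \sum_(i < m) \sum_(j < n) F (mxvec_index i j).
Proof.
rewrite pair_bigA /=.
rewrite (reindex (fun ij : 'I_m * 'I_n => mxvec_index ij.1 ij.2)) //=.
exists (@pidx m n) => [[i j] _|p _]; first by rewrite pidx_mxvec.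
exact: mxvec_pidx.
Qed.

Lemma big_pidx2 m n m' n' (F : 'I_(m * n) -> 'I_(m' * n') -> C) :
  \sum_p \sum_q F p q = \sum_(i < m) \sum_(j < n) \sum_(i' < m') \sum_(j' < n')
     F (mxvec_index i j) (mxvec_index i' j').
Proof.
rewrite big_pidx; apply: eq_bigr => i _; apply: eq_bigr => j _; exact: big_pidx.
Qed.

Lemma sum_delta (I : finType) (s : I) (F : I -> C) :
  \sum_q (if q == s then F q else 0) = F s.
Proof. by rewrite -big_mkcond big_pred1_eq. Qed.

Lemma sum_delta' (I : finType) (s : I) (F : I -> C) :
  \sum_q (if s == q then F q else 0) = F s.
Proof. rewrite -(sum_delta s F); apply: eq_bigr => q _; by rewrite eq_sym. Qed.

Lemma eq_pidx m n (p q : 'I_(m * n)) :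
  (p == q) = ((pidx p).1 == (pidx q).1) && ((pidx p).2 == (pidx q).2).
Proof.
rewrite -(inj_eq (@pidx_inj m n)).
by case: (pidx p) => a b; case: (pidx q) => c e; rewrite xpair_eqE.
Qed.

Lemma kronE m1 n1 m2 n2 (A : 'M[C]_(m1, n1)) (B : 'M[C]_(m2, n2)) p q :
  kron A B p q = A (pidx p).1 (pidx q).1 * B (pidx p).2 (pidx q).2.
Proof. by rewrite mxE. Qed.

Lemma dephase_kron m n (A : 'M[C]_m) (B : 'M[C]_n) :
  dephase (kron A B) = kron (dephase A) (dephase B).
Proof.
apply/matrixP => p q; rewrite !mxE eq_pidx.
by case: eqP => [->|_]; case: eqP => [->|_]; rewrite ?mulr0 ?mul0r ?eqxx.
Qed.

Lemma dephaseK n (A : 'M[C]_n) : dephase (dephase A) = dephase A.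
Proof. by apply/matrixP => p q; rewrite !mxE; case: eqP => [->|]; rewrite ?mxE ?eqxx. Qed.

Lemma tr_kron m n (A : 'M[C]_m) (B : 'M[C]_n) : \tr (kron A B) = \tr A * \tr B.
Proof.
rewrite /mxtrace big_pidx mulr_suml; apply: eq_bigr => i _.
rewrite mulr_sumr; apply: eq_bigr => j _; by rewrite kronE pidx_mxvec.
Qed.

Lemma psd_form n (A : 'M[C]_n) :
  psd A <-> forall v : 'cV[C]_n, 0 <= \sum_p \sum_q (v p 0)^* * A p q * v q 0.
Proof.
have E v : (adj_mx v *m A *m v) 0 0 = \sum_p \sum_q (v p 0)^* * A p q * v q 0.
  rewrite mxE exchange_big; apply: eq_bigr => q _; rewrite mxE mulr_suml.
  by apply: eq_bigr => p _; rewrite !mxE.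
by split=> H v; [rewrite -E | rewrite E].
Qed.

End Aux.

Section Main.
Variable R : realType.
Local Notation C := R[i].

Definition gsum k n (j : 'I_k) (A : 'M[C]_(k * n)) : C :=
  \sum_(u | (pidx u).1 == j) A u u.

Definition blk r n (X : 'M[C]_(r * n)) (a b : 'I_r) : 'M[C]_n :=
  \matrix_(x, y) X (mxvec_index a x) (mxvec_index b y).

Lemma gsumE k n j (A : 'M[C]_(k * n)) :
  gsum j A = \sum_(x < n) A (mxvec_index j x) (mxvec_index j x).
Proof.
rewrite /gsum big_mkcond big_pidx (bigD1 j) //= [X in _ + X]big1 ?addr0.
  by apply: eq_bigr => x _; rewrite pidx_mxvec eqxx.
move=> i /negbTE H; apply: big1 => x _; by rewrite pidx_mxvec /= H.
Qed.

Lemma sum_gsum k n (A : 'M[C]_(k * n)) : \sum_j gsum j A = \tr A.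
Proof. by rewrite /mxtrace big_pidx; apply: eq_bigr => j _; rewrite gsumE. Qed.

Lemma gsum_dephase k n j (A : 'M[C]_(k * n)) : gsum j (dephase A) = gsum j A.
Proof. by apply: eq_bigr => u _; rewrite mxE eqxx. Qed.

Lemma gsum_lin k n j a (A B : 'M[C]_(k * n)) :
  gsum j (a *: A + B) = a * gsum j A + gsum j B.
Proof. by rewrite /gsum mulr_sumr -big_split; apply: eq_bigr => u _; rewrite !mxE. Qed.

Lemma kron_linl m1 n1 m2 n2 a (A B : 'M[C]_(m1, n1)) (S : 'M[C]_(m2, n2)) :
  kron (a *: A + B) S = a *: kron A S + kron B S.
Proof. by apply/matrixP => p q; rewrite !mxE mulrDl mulrA. Qed.

Lemma tr_meas k n j (A : 'M[C]_(k * n)) :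
  \tr (A *m kron (delta_mx j j : 'M[C]_k) (1%:M : 'M[C]_n)) = gsum j A.
Proof.
rewrite /mxtrace /gsum [RHS]big_mkcond; apply: eq_bigr => u _.
rewrite mxE (bigD1 u) //= [X in _ + X]big1 ?addr0.
  rewrite kronE !mxE !eqxx /= andbb mulr1.
  by case: eqP => _; rewrite ?mulr1 ?mulr0.
move=> v Hv; rewrite kronE !mxE.
move: Hv; rewrite eq_pidx.
case: (pidx v) => v1 v2; case: (pidx u) => u1 u2 /=.
case: (v1 =P j) => [->|]; case: (u1 =P j) => [->|] /=; rewrite ?eqxx /=;
  try by rewrite ?mul0r ?mulr0.
by move=> /negbTE ->; rewrite !mulr0.
Qed.


Lemma amplE r n m (E : 'M[C]_n -> 'M[C]_m) (X : 'M[C]_(r * n)) a b u u' :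
  ampl E X (mxvec_index a u) (mxvec_index b u') = E (blk X a b) u u'.
Proof. by rewrite mxE !pidx_mxvec. Qed.

Lemma psd_diag n (A : 'M[C]_n) s : psd A -> 0 <= A s s.
Proof.
move=> /psd_form /(_ (\col_i (if i == s then 1 else 0))).
rewrite (eq_bigr (fun p => if p == s then A s s else 0)) ?sum_delta //.
move=> p _; rewrite !mxE; case: eqP => [->|_].
  rewrite (eq_bigr (fun q => if q == s then A s s else 0)) ?sum_delta //.
  move=> q _; rewrite !mxE; case: eqP => [->|_]; by rewrite ?conjC1 ?mul1r ?mulr1 ?mulr0.
by apply: big1 => q _; rewrite !mxE conjC0 !mul0r.
Qed.

Section Chan.
Variables (k d t : nat) (M : 'M[C]_(d * t) -> 'M[C]_(k * (d * t))) (tau : 'M[C]_t).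
Hypothesis HM : DIO M.
Hypothesis Htau : density tau.
Hypothesis d_gt0 : (0 < d)%N.

Definition sig := dephase tau.
Definition fN j (X : 'M[C]_d) := gsum j (M (kron X sig)).
Definition Nnew (X : 'M[C]_d) : 'M[C]_(k * d) :=
  \matrix_(p, q) (if p == q then fN (pidx p).1 X / d%:R else 0).

Definition Zm r (X : 'M[C]_(r * d)) : 'M[C]_(r * (d * t)) :=
  \matrix_(P, Q) (X (mxvec_index (pidx P).1 (pidx (pidx P).2).1)
                    (mxvec_index (pidx Q).1 (pidx (pidx Q).2).1)
                  * sig (pidx (pidx P).2).2 (pidx (pidx Q).2).2).

Lemma blk_Zm r (X : 'M[C]_(r * d)) a b : blk (Zm X) a b = kron (blk X a b) sig.
Proof. by apply/matrixP => x y; rewrite !mxE !pidx_mxvec. Qed.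

Lemma sig_pos s : 0 <= sig s s.
Proof. rewrite mxE eqxx; apply: psd_diag; by case: Htau. Qed.

Lemma Zm_psd r (X : 'M[C]_(r * d)) : psd X -> psd (Zm X).
Proof.
move=> /psd_form HX; apply/psd_form => v.
set u := fun s => (\col_P
   v (mxvec_index (pidx P).1 (mxvec_index (pidx P).2 s)) 0 : 'cV[C]_(r * d)).
have -> : \sum_p \sum_q (v p 0)^* * Zm X p q * v q 0 =
   \sum_s (sig s s * \sum_p \sum_q ((u s) p 0)^* * X p q * (u s) q 0).
  rewrite big_pidx2.
  transitivity (\sum_(a < r) \sum_(s < t) \sum_(x < d) \sum_(b < r) \sum_(y < d)
     (v (mxvec_index a (mxvec_index x s)) 0)^* * X (mxvec_index a x) (mxvec_index b y)
       * sig s s * v (mxvec_index b (mxvec_index y s)) 0).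
    apply: eq_bigr => a _; rewrite big_pidx exchange_big; apply: eq_bigr => s _.
    apply: eq_bigr => x _; apply: eq_bigr => b _; rewrite big_pidx.
    apply: eq_bigr => y _.
    rewrite (eq_bigr (fun s' => if s' == s then
       (v (mxvec_index a (mxvec_index x s)) 0)^* * X (mxvec_index a x) (mxvec_index b y)
       * sig s s * v (mxvec_index b (mxvec_index y s)) 0 else 0)) ?sum_delta //.
    move=> s' _; rewrite mxE !pidx_mxvec /= [sig s s']mxE [sig s s]mxE eqxx.
    case: (s' =P s) => [->|/eqP]; rewrite ?eqxx ?mulrA //.
    by rewrite eq_sym => /negbTE ->; rewrite !mulr0 mul0r.
  rewrite [LHS]exchange_big /=; apply: eq_bigr => s _.
  rewrite big_pidx2 mulr_sumr; apply: eq_bigr => a _.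
  rewrite mulr_sumr; apply: eq_bigr => x _.
  rewrite mulr_sumr; apply: eq_bigr => b _.
  rewrite mulr_sumr; apply: eq_bigr => y _.
  rewrite !mxE !pidx_mxvec /=; ring.
apply: sumr_ge0 => s _; apply: mulr_ge0; [exact: sig_pos | exact: HX].
Qed.


Lemma M_cp r (Y : 'M[C]_(r * (d * t))) : psd Y -> psd (ampl M Y).
Proof. by case: HM => [[_ H _] _]; apply: H. Qed.

Lemma Fpsd r (X : 'M[C]_(r * d)) (w : 'I_r -> C) j : psd X ->
  0 <= \sum_a \sum_b (w a)^* * fN j (blk X a b) * w b.
Proof.
move=> /Zm_psd /M_cp /psd_form HZ.
have key u : 0 <= \sum_a \sum_b (w a)^* * M (blk (Zm X) a b) u u * w b.
  have := HZ (\col_P (if (pidx P).2 == u then w (pidx P).1 else 0)).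
  rewrite big_pidx2.
  suff E : forall a, \sum_u1 \sum_b \sum_u2
     ((\col_P (if (pidx P).2 == u then w (pidx P).1 else 0)) (mxvec_index a u1) 0)^* *
     ampl M (Zm X) (mxvec_index a u1) (mxvec_index b u2) *
     (\col_P (if (pidx P).2 == u then w (pidx P).1 else 0)) (mxvec_index b u2) 0
     = \sum_b (w a)^* * M (blk (Zm X) a b) u u * w b.
    by rewrite (eq_bigr _ (fun a _ => E a)).
  move=> a.
  rewrite (eq_bigr (fun u1 => if u1 == u then
      \sum_b (w a)^* * M (blk (Zm X) a b) u u * w b else 0)) ?sum_delta //.
  move=> u1 _; case: (u1 =P u) => [->|/eqP/negbTE ne].
    apply: eq_bigr => b _.
    rewrite (eq_bigr (fun u2 => if u2 == u then
      (w a)^* * M (blk (Zm X) a b) u u * w b else 0)) ?sum_delta //.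
    move=> u2 _; rewrite amplE !mxE !pidx_mxvec /= eqxx.
    by case: (u2 =P u) => [->|_]; rewrite ?mulr0.
  apply: big1 => b _; apply: big1 => u2 _.
  by rewrite !mxE pidx_mxvec /= ne conjC0 !mul0r.
have -> : \sum_a \sum_b (w a)^* * fN j (blk X a b) * w b =
   \sum_(u | (pidx u).1 == j) \sum_a \sum_b (w a)^* * M (blk (Zm X) a b) u u * w b.
  rewrite [RHS]exchange_big /=; apply: eq_bigr => a _.
  rewrite [RHS]exchange_big /=; apply: eq_bigr => b _.
  by rewrite blk_Zm /fN /gsum mulr_sumr mulr_suml.
by apply: sumr_ge0 => u _; apply: key.
Qed.

Lemma Nnew_cp r (X : 'M[C]_(r * d)) : psd X -> psd (ampl Nnew X).
Proof.
move=> HX; apply/psd_form => v; rewrite big_pidx2.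
have -> : \sum_a \sum_u1 \sum_b \sum_u2
   (v (mxvec_index a u1) 0)^* * ampl Nnew X (mxvec_index a u1) (mxvec_index b u2) *
   v (mxvec_index b u2) 0 =
   \sum_u1 (d%:R^-1 * \sum_a \sum_b (v (mxvec_index a u1) 0)^* *
      fN (pidx u1).1 (blk X a b) * v (mxvec_index b u1) 0).
  rewrite [LHS]exchange_big /=; apply: eq_bigr => u1 _.
  rewrite mulr_sumr; apply: eq_bigr => a _.
  rewrite mulr_sumr; apply: eq_bigr => b _.
  rewrite (eq_bigr (fun u2 => if u2 == u1 then d%:R^-1 * ((v (mxvec_index a u1) 0)^* *
      fN (pidx u1).1 (blk X a b) * v (mxvec_index b u1) 0) else 0)) ?sum_delta //.
  move=> u2 _; rewrite amplE mxE.
  case: (u2 =P u1) => [->|/eqP ne]; first by rewrite eqxx; ring.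
  by rewrite eq_sym (negbTE ne) mulr0 mul0r.
apply: sumr_ge0 => u1 _; apply: mulr_ge0; first by rewrite invr_ge0 ler0n.
exact: (Fpsd (fun a => v (mxvec_index a u1) 0)).
Qed.


Lemma M_lin a X Y : M (a *: X + Y) = a *: M X + M Y.
Proof. by case: HM => [[H _ _] _]. Qed.
Lemma M_tp X : \tr (M X) = \tr X.
Proof. by case: HM => [[_ _ H] _]. Qed.
Lemma M_deph X : dephase (M X) = M (dephase X).
Proof. by case: HM. Qed.

Lemma fN_D j X : fN j X = gsum j (M (kron (dephase X) sig)).
Proof. by rewrite /fN -gsum_dephase M_deph dephase_kron /sig dephaseK. Qed.

Lemma fN_deph j X : fN j (dephase X) = fN j X.
Proof. by rewrite !fN_D dephaseK. Qed.

Lemma fN_lin j a X Y : fN j (a *: X + Y) = a * fN j X + fN j Y.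
Proof. by rewrite /fN kron_linl M_lin gsum_lin. Qed.

Lemma dnz : (d%:R : C) != 0.
Proof. by rewrite pnatr_eq0 -lt0n. Qed.

Lemma gsum_Nnew j X : gsum j (Nnew X) = fN j X.
Proof.
rewrite gsumE (eq_bigr (fun _ => fN j X / d%:R)).
  by rewrite sumr_const card_ord -(mulr_natr (fN j X / d%:R)) divfK // dnz.
by move=> x _; rewrite mxE eqxx pidx_mxvec.
Qed.

Lemma tr_sig : \tr sig = 1.
Proof.
case: Htau => _ <-; rewrite /mxtrace; apply: eq_bigr => i _; by rewrite mxE eqxx.
Qed.

Lemma Nnew_DIO : DIO Nnew.
Proof.
split; first split.
- move=> a X Y; apply/matrixP => p q; rewrite !mxE.
  case: eqP => _; last by rewrite mulr0 addr0.
  by rewrite fN_lin mulrDl mulrA.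
- move=> r X; exact: Nnew_cp.
- move=> X; rewrite -(sum_gsum (Nnew X)) (eq_bigr _ (fun j _ => gsum_Nnew j X)).
  by rewrite (eq_bigr _ (fun j _ => erefl (fN j X))) sum_gsum M_tp tr_kron tr_sig mulr1.
- move=> X; apply/matrixP => p q; rewrite !mxE.
  by case: eqP => [->|_]; rewrite ?eqxx ?fN_deph.
Qed.

Lemma succ_eq (p : 'I_k -> R) (rho : 'I_k -> 'M[C]_d) :
  succ p rho Nnew = succ p (fun j => kron (rho j) tau) M.
Proof.
rewrite /succ; congr complex.Re; apply: eq_bigr => j _; congr (_ * _).
rewrite !tr_meas gsum_Nnew fN_D.
by rewrite -[gsum j (M (kron (rho j) tau))]gsum_dephase M_deph dephase_kron.
Qed.

End Chan.
End Main.

Theorem proposition2 (R : realType) (k d : nat) (p : 'I_k -> R)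
  (rho : 'I_k -> 'M[R[i]]_d) (t : nat) (tau : 'M[R[i]]_t) :
  ensemble p rho -> density tau ->
  (Psuc_DIO p (fun j => kron (rho j) tau) <= Psuc_DIO p rho)%E.
Proof.
move=> [p_ge0 psum Hrho] Htau.
have k_gt0 : (0 < k)%N.
  case: (posnP k) => // k0; exfalso; move: psum.
  rewrite big1; last by case=> j hj; exfalso; move: hj; rewrite k0.
  by move/eqP; rewrite eq_sym oner_eq0.
have d_gt0 : (0 < d)%N.
  case: (posnP d) => // d0; exfalso.
  case: (Hrho (Ordinal k_gt0)) => _; rewrite /mxtrace big1; last by case=> j hj; exfalso; move: hj; rewrite d0.
  by move/eqP; rewrite eq_sym oner_eq0.
apply: ge_ereal_sup => _ [N' HN' <-].
rewrite -(succ_eq tau HN' d_gt0).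
apply: ereal_sup_ubound; exists (Nnew N' tau) => //.
exact: Nnew_DIO.
Qed.
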